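(* For all positive integers $n$ and $j$, $L_n(j)=A_n\big(10+6(j-1)\big)$.
   Context: The continued fraction $[a_1;a_2:\dots:a_k]$ means $a_1+1/(a_2+1/(\cdots+1/a_k))$. For a sequence $(a_1,\dots,a_k)$ of positive integers with $k\ge2$, $\breve K(a_1,\dots,a_k)$ is the integer $c$ where $[a_1;a_2:\dots:a_{k-1}]=c/d$ with $\gcd(c,d)=1$, $c,d>0$ (the last entry $a_k$ is omitted). For a positive integer $n$ let $a_n=n^2+3$, $b_n=n^4+5n^2+5$, $l_n=(na_n)^2+2$. Define $L_n(1)=\breve K(na_n,na_n,nb_n,nb_n)$, $L_n(2)=\breve K(na_n,na_n,na_n,na_n,nb_n,nb_n)$, and $L_n(j)=l_nL_n(j-1)-L_n(j-2)$ for $j>2$. Define $A_n(1)=1$, $A_n(2)=n(n^2+4)$, and $A_n(j)=nA_n(j-1)+A_n(j-2)$ for $j>2$. *)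

(* Defs.v *)
From HB Require Import structures.
From mathcomp Require Import all_boot all_order all_algebra.
Set Implicit Arguments. Unset Strict Implicit. Unset Printing Implicit Defensive.
Import Order.TTheory GRing.Theory Num.Theory.

Local Open Scope ring_scope.

Fixpoint cfrac (s : seq nat) : rat :=
  match s with
  | [::] => 0
  | [:: a] => a%:R
  | a :: t => a%:R + (cfrac t)^-1
  end.

(* \breve K(a_1,...,a_k): the numerator c (in lowest terms, c > 0) of
   [a_1; ...; a_{k-1}], i.e. the last entry is omitted. *)
Definition Kb (s : seq nat) : int :=
  match s with
  | [::] => 0
  | a :: t => numq (cfrac (belast a t))
  end.

Definition an (n : nat) : nat := (n ^ 2 + 3)%N.
Definition bn (n : nat) : nat := (n ^ 4 + 5 * n ^ 2 + 5)%N.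
Definition ln (n : nat) : nat := ((n * an n) ^ 2 + 2)%N.

Fixpoint Lseq (n : nat) (j : nat) : int :=
  match j with
  | 0%N => 0
  | 1%N => Kb [:: n * an n; n * an n; n * bn n; n * bn n]%N
  | 2%N => Kb [:: n * an n; n * an n; n * an n; n * an n; n * bn n; n * bn n]%N
  | S ((S ((S k) as k1)) as k2) => (ln n)%:Z * Lseq n k2 - Lseq n k1
  end.

Fixpoint Aseq (n : nat) (j : nat) : nat :=
  match j with
  | 0%N => 0%N
  | 1%N => 1%N
  | 2%N => (n * (n ^ 2 + 4))%N
  | S ((S ((S k) as k1)) as k2) => (n * Aseq n k2 + Aseq n k1)%N
  end.

(* Main.v *)
Require Import Defs.
From HB Require Import structures.
From mathcomp Require Import all_boot all_order all_algebra ring.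
Import Order.TTheory GRing.Theory Num.Theory.
Local Open Scope ring_scope.

Lemma cf_step (a p q : nat) (t : seq nat) : t <> [::] ->
  cfrac t = p%:R / q%:R -> (0 < p)%N -> (0 < q)%N ->
  cfrac (a :: t) = (a * p + q)%N%:R / p%:R.
Proof.
move=> tn ht hp hq; case: t tn ht => [//|x t] _ ht.
rewrite [cfrac _]/= -/(cfrac (x :: t)) ht invf_div.
have p0 : (p%:R : rat) != 0 by rewrite pnatr_eq0 -lt0n.
rewrite natrD natrM; field; done.
Qed.

Lemma cop_step (a p q : nat) : coprime p q -> coprime (a * p + q)%N p.
Proof. rewrite /coprime => h. by rewrite gcdnC gcdnMDl. Qed.

Lemma numq_nat (p q : nat) : coprime p q -> (0 < q)%N ->
  numq ((p%:R : rat) / q%:R) = p%:Z.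
Proof.
move=> c hq.
have := @coprimeq_num p%:Z q%:Z; rewrite !absz_nat => /(_ c).
rewrite !pmulrn => ->. by rewrite gtr0_sg ?mul1r // ltz_nat.
Qed.

Lemma Ar (n k : nat) : Aseq n k.+3 = (n * Aseq n k.+2 + Aseq n k.+1)%N.
Proof. by []. Qed.

Lemma A12 (n m : nat) :
  (Aseq n (m + 13) + Aseq n m.+1 = ln n * Aseq n (m + 7))%N.
Proof.
rewrite !addnS addn0.
rewrite !Ar /ln /an.
set x := Aseq n m.+2; set y := Aseq n m.+1.
ring.
Qed.


Lemma cf1 (b : nat) : cfrac [:: b] = b%:R / 1%N%:R.
Proof. by rewrite /= divr1. Qed.

Lemma L1 (n : nat) : (0 < n)%N -> Lseq n 1 = (Aseq n 10)%:Z.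
Proof.
move=> n0.
set a := (n * an n)%N; set b := (n * bn n)%N.
have b0 : (0 < b)%N by rewrite /b muln_gt0 n0 /bn addn_gt0 orbT.
change (numq (cfrac [:: a; a; b]) = (Aseq n 10)%:Z).
have e2 := @cf_step a _ _ [:: b] (fun h => match h with end) (cf1 b) b0 isT.
have p2 : (0 < a * b + 1)%N by rewrite addn_gt0 orbT.
have e3 := @cf_step a _ _ [:: a; b] (fun h => match h with end) e2 p2 b0.
rewrite e3 ?numq_nat //.
- congr Posz. rewrite /= /a /b /an /bn. ring.
- apply: cop_step; apply: cop_step. exact: coprimen1.
Qed.

Lemma L2 (n : nat) : (0 < n)%N -> Lseq n 2 = (Aseq n 16)%:Z.
Proof.
move=> n0.
set a := (n * an n)%N; set b := (n * bn n)%N.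
have b0 : (0 < b)%N by rewrite /b muln_gt0 n0 /bn addn_gt0 orbT.
change (numq (cfrac [:: a; a; a; a; b]) = (Aseq n 16)%:Z).
have e2 := @cf_step a _ _ [:: b] (fun h => match h with end) (cf1 b) b0 isT.
have p2 : (0 < a * b + 1)%N by rewrite addn_gt0 orbT.
have e3 := @cf_step a _ _ [:: a; b] (fun h => match h with end) e2 p2 b0.
have p3 : (0 < a * (a * b + 1) + b)%N by rewrite addn_gt0 b0 orbT.
have e4 := @cf_step a _ _ [:: a; a; b] (fun h => match h with end) e3 p3 p2.
have p4 : (0 < a * (a * (a * b + 1) + b) + (a * b + 1))%N by rewrite addn_gt0 p2 orbT.
have e5 := @cf_step a _ _ [:: a; a; a; b] (fun h => match h with end) e4 p4 p3.
rewrite e5 ?numq_nat //.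
- congr Posz. rewrite /= /a /b /an /bn. ring.
- do 4 apply: cop_step. exact: coprimen1.
Qed.

From mathcomp Require Import zify.
Theorem lemma5 (n j : nat) :
  (0 < n)%N -> (0 < j)%N ->
  Lseq n j = ((Aseq n (10 + 6 * (j - 1))%N)%:Z)%R.
Proof.
move=> n0; case: j => [//|k] _; rewrite subn1 /=.
suff : Lseq n k.+1 = (Aseq n (10 + 6 * k))%:Z /\
       Lseq n k.+2 = (Aseq n (16 + 6 * k))%:Z by case.
elim: k => [|k [IH1 IH2]]; first by rewrite L1 // L2.
split; first by rewrite IH2; congr (Posz (Aseq n _)); lia.
have h := A12 n (9 + 6 * k).
have e1 : (9 + 6 * k + 13 = 16 + 6 * k.+1)%N by lia.
have e2 : ((9 + 6 * k).+1 = 10 + 6 * k)%N by lia.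
have e3 : (9 + 6 * k + 7 = 16 + 6 * k)%N by lia.
rewrite e1 e2 e3 in h.
change (Lseq n k.+3) with ((ln n)%:Z * Lseq n k.+2 - Lseq n k.+1).
rewrite IH1 IH2 -PoszM -h PoszD addrK.
by [].
Qed.
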